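(* Assume the vertex degrees of $G$ are uniformly bounded, let $\theta\in(0,1)$, $\rho=\lim_nR_n^{1/n}$, and let $z\in\mathbb C$ with $|z|>\theta\rho$. Then every $f\in\mathrm{Lip}_\theta$ with $\mathcal Tf=zf$ lies in $D_1$, i.e. $f(e_1,e_2,\dots)$ depends only on $e_1$.
   Context: $G$ is a connected, locally finite graph (no loops, no multiple edges, every vertex of degree $\ge2$), possibly infinite. $E$ oriented edges with $\iota,\tau$, opposite $\bar e$; turn $e\rightsquigarrow e'$ iff $\tau(e)=\iota(e')$, $e'\ne\bar e$. $P$ = infinite paths $(e_1,e_2,\dots)$ with $e_i\rightsquigarrow e_{i+1}$; $(\mathcal Tf)(e_1,\dots)=\sum_{e_0\rightsquigarrow e_1}f(e_0,e_1,\dots)$. $R_n=\sup_e\#\{(e_{-n},\dots,e_0):e_i\rightsquigarrow e_{i+1},\ e_0=e\}$. $D_1$ = bounded functions on $P$ depending only on the first edge. $d_\theta(p,p')=\theta^{k-1}$, $k=\min\{i:e_i\ne e'_i\}$; $\mathrm{Lip}_\theta$ = bounded $f:P\to\mathbb C$ uniformly $d_\theta$-Lipschitz on each island $\{p:\iota(e_1)=v\}$. *)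

(* Defs.v *)
From mathcomp Require Import all_boot all_order all_algebra.
From mathcomp Require Import all_classical all_reals all_analysis.
From mathcomp Require Export complex.
Set Implicit Arguments. Unset Strict Implicit. Unset Printing Implicit Defensive.
Import Order.TTheory GRing.Theory Num.Theory.
Local Open Scope ring_scope.

(* A graph is given by its (finite, duplicate-free) neighbour lists:
   this encodes local finiteness. *)
Section Graph.
Variable V : eqType.
Variable nbrs : V -> seq V.

Definition adj (u v : V) : bool := v \in nbrs u.

Definition good_graph : Prop :=
  [/\ (forall v, uniq (nbrs v)),
      (forall u v, adj u v = adj v u),
      (forall v, ~~ adj v v),
      (forall v, 2 <= size (nbrs v))%N &
      (forall u v, exists s : seq V, path adj u s /\ last u s = v)].

Definition bounded_degree : Prop := exists D : nat, forall v, (size (nbrs v) <= D)%N.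

(* oriented edges: e = (iota e, tau e) *)
Definition edge := (V * V)%type.
Definition is_edge (e : edge) : bool := adj e.1 e.2.
Definition ebar (e : edge) : edge := (e.2, e.1).

Definition turn (e e' : edge) : bool :=
  [&& is_edge e, is_edge e', e.2 == e'.1 & e' != ebar e].

(* infinite paths (e_1, e_2, ...) are sequences p with p 0 = e_1 *)
Definition is_path (p : nat -> edge) : Prop :=
  is_edge (p 0%N) /\ forall i, turn (p i) (p i.+1).

Definition pcons (e : edge) (p : nat -> edge) : nat -> edge :=
  fun n => match n with 0 => e | k.+1 => p k end.

(* number of chains (e_{-n}, ..., e_0) with e_i ~> e_{i+1} and e_0 = e *)
Fixpoint nchains (n : nat) (e : edge) : nat :=
  match n with
  | 0 => 1
  | k.+1 => \sum_(w <- nbrs e.1 | w != e.2) nchains k (w, e.1)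
  end.

Variable R : realType.

Definition Rn (n : nat) : R :=
  sup [set (nchains n e)%:R | e in [set e : edge | is_edge e]]%classic.

Definition rho : R := limn (fun n => Rn n `^ (n%:R)^-1).

Definition transfer (f : (nat -> edge) -> R[i]) (p : nat -> edge) : R[i] :=
  \sum_(w <- nbrs (p 0%N).1 | w != (p 0%N).2) f (pcons (w, (p 0%N).1) p).

Definition toC (x : R) : R[i] := (x%:C)%C.

(* d_theta(p,p') = theta^(k-1), k = min{i >= 1 : e_i <> e'_i} (1-based);
   with 0-based indexing this is theta^k0, k0 the first differing index;
   d = 0 if p = p'. *)
Definition dtheta (theta : R) (p q : nat -> edge) : R :=
  match pselect (exists k, p k != q k) with
  | left h => theta ^+ (ex_minn h)
  | right _ => 0
  end.

Definition Lip (theta : R) (f : (nat -> edge) -> R[i]) : Prop :=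
  (exists M : R, forall p, is_path p -> `|f p| <= toC M) /\
  (exists L : R, forall p q, is_path p -> is_path q -> (p 0%N).1 = (q 0%N).1 ->
     `|f p - f q| <= toC L * toC (dtheta theta p q)).

Definition in_D1 (f : (nat -> edge) -> R[i]) : Prop :=
  (exists M : R, forall p, is_path p -> `|f p| <= toC M) /\
  (forall p q, is_path p -> is_path q -> p 0%N = q 0%N -> f p = f q).

End Graph.

(* Main.v *)
Require Import Defs.
From mathcomp Require Import all_boot all_order all_algebra.
From mathcomp Require Import all_classical all_reals all_analysis.
From mathcomp Require Import complex.
From mathcomp Require Import ring lra.
Import Order.TTheory GRing.Theory Num.Theory.
Local Open Scope ring_scope.

Lemma sum_le_size (T : Type) (s : seq T) (P : pred T) (F : T -> nat) c :
  (forall w, (F w <= c)%N) -> (\sum_(w <- s | P w) F w <= size s * c)%N.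
Proof.
move=> H; elim: s => [|a s IH]; first by rewrite big_nil.
rewrite big_cons /=; case: (P a).
- by rewrite mulSn leq_add.
- by rewrite mulSn (leq_trans IH) // leq_addl.
Qed.

Lemma sum_ge_term (T : eqType) (s : seq T) (P : pred T) (F : T -> nat) w :
  w \in s -> P w -> (F w <= \sum_(x <- s | P x) F x)%N.
Proof.
move=> ws Pw; elim: s ws => [|a s IH] //; rewrite inE big_cons.
case/orP=> [/eqP<-|ws]; first by rewrite Pw leq_addr.
case: (P a); last exact: IH.
by rewrite (leq_trans (IH ws)) // leq_addl.
Qed.

Lemma nchains_le (V : eqType) (nbrs : V -> seq V) (D : nat) :
  (forall v, (size (nbrs v) <= D)%N) -> forall n e, (nchains nbrs n e <= D ^ n)%N.
Proof.
move=> HD; elim=> [|n IH] e //=.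
rewrite (leq_trans (sum_le_size _ _ _ _ _ (fun w => IH (w, e.1)))) //.
by rewrite expnS leq_mul2r HD orbT.
Qed.

Lemma nchains_ge1 (V : eqType) (nbrs : V -> seq V) :
  good_graph nbrs -> forall n e, (0 < nchains nbrs n e)%N.
Proof.
case=> Hu _ _ H2 _; elim=> [|n IH] e //=.
have [w ws wne] : exists2 w, w \in nbrs e.1 & w != e.2.
  move: (Hu e.1) (H2 e.1); case: (nbrs e.1) => [|a [|b s]] //= /andP[].
  rewrite inE negb_or => /andP[ab _] _ _.
  have [ae|ae] := eqVneq a e.2; last by exists a; rewrite ?inE ?eqxx.
  by exists b; rewrite ?inE ?eqxx ?orbT // -ae eq_sym.
exact: (leq_trans (IH (w, e.1)) (sum_ge_term _ _ _ _ _ ws wne)).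
Qed.

Set Implicit Arguments. Unset Strict Implicit.

Lemma Rn_ub (V : eqType) (nbrs : V -> seq V) (R : realType) (D : nat) :
  (forall v, (size (nbrs v) <= D)%N) -> forall n e, is_edge nbrs e ->
  (nchains nbrs n e)%:R <= Rn nbrs R n.
Proof.
move=> HD n e he; apply: sup_upper_bound; last by exists e.
split; first by exists (nchains nbrs n e)%:R; exists e.
exists (D ^ n)%:R => _ [e' _ <-]; rewrite ler_nat; exact: nchains_le.
Qed.

Lemma Rn_le (V : eqType) (nbrs : V -> seq V) (R : realType) (D : nat) e0 :
  (forall v, (size (nbrs v) <= D)%N) -> is_edge nbrs e0 -> forall n,
  Rn nbrs R n <= (D ^ n)%:R.
Proof.
move=> HD he n; apply: ge_sup; first by exists (nchains nbrs n e0)%:R; exists e0.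
move=> _ [e' _ <-]; rewrite ler_nat; exact: nchains_le.
Qed.

Lemma Rn_ge1 (V : eqType) (nbrs : V -> seq V) (R : realType) (D : nat) e0 :
  good_graph nbrs ->
  (forall v, (size (nbrs v) <= D)%N) -> is_edge nbrs e0 -> forall n,
  1 <= Rn nbrs R n.
Proof.
move=> G HD he n; apply: (le_trans _ (Rn_ub R HD n he)).
by rewrite ler1n; apply: nchains_ge1.
Qed.

Lemma nchains_sub (V : eqType) (nbrs : V -> seq V) (R : realType) (D : nat) m :
  good_graph nbrs ->
  (forall v, (size (nbrs v) <= D)%N) -> forall n e, is_edge nbrs e ->
  (nchains nbrs (n + m) e)%:R <= (nchains nbrs n e)%:R * Rn nbrs R m.
Proof.
move=> G HD; elim=> [|n IH] e he; first by rewrite add0n mul1r; exact: Rn_ub.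
rewrite addSn /= !natr_sum mulr_suml big_seq_cond [X in _ <= X]big_seq_cond.
apply: ler_sum => w /andP[ws wne]; apply: IH.
case: G => _ Hs _ _ _; by rewrite /is_edge /= Hs.
Qed.

Lemma Rn_mul (V : eqType) (nbrs : V -> seq V) (R : realType) (D : nat) e0 :
  good_graph nbrs ->
  (forall v, (size (nbrs v) <= D)%N) -> is_edge nbrs e0 -> forall n m,
  Rn nbrs R (n + m) <= Rn nbrs R n * Rn nbrs R m.
Proof.
move=> G HD he n m; apply: ge_sup; first by exists (nchains nbrs (n + m) e0)%:R; exists e0.
move=> _ [e' he' <-]; apply: le_trans (nchains_sub R m G HD n he') _.
apply: ler_wpM2r; first by apply: le_trans (Rn_ge1 R G HD he m).
exact: Rn_ub.
Qed.

Lemma Rn_pow (V : eqType) (nbrs : V -> seq V) (R : realType) (D : nat) e0 :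
  good_graph nbrs ->
  (forall v, (size (nbrs v) <= D)%N) -> is_edge nbrs e0 -> forall m q r,
  Rn nbrs R (q * m + r) <= Rn nbrs R m ^+ q * (D ^ r)%:R.
Proof.
move=> G HD he m; elim=> [|q IH] r; first by rewrite mul0n add0n mul1r (Rn_le R HD he).
rewrite mulSn -addnA (le_trans (Rn_mul R G HD he _ _)) // exprS -mulrA.
apply: ler_wpM2l; first by apply: le_trans (Rn_ge1 R G HD he m).
exact: IH.
Qed.

Lemma powR_root (R : realType) (x : R) n : 0 <= x -> (0 < n)%N ->
  (x `^ (n%:R)^-1) ^+ n = x.
Proof.
move=> x0 n0; rewrite -powR_mulrn ?powR_ge0 // -powRrM mulVf ?powRr1 //.
by rewrite pnatr_eq0 -lt0n.
Qed.

Lemma root_le (R : realType) (x y : R) n : 0 <= x -> 0 <= y -> (0 < n)%N ->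
  x <= y ^+ n -> x `^ (n%:R)^-1 <= y.
Proof.
move=> x0 y0 n0 h; rewrite -(ler_pXn2r n0) ?nnegrE ?powR_ge0 //.
by rewrite powR_root.
Qed.

Lemma bern (R : realFieldType) (d : R) n : 0 <= d -> 1 + n%:R * d <= (1 + d) ^+ n.
Proof.
move=> d0; elim: n => [|n IH]; first by rewrite mul0r addr0 expr0.
rewrite exprS; apply: le_trans (ler_wpM2l _ IH); last by rewrite addr_ge0.
rewrite mulrDr mulr1 mulrDl mul1r -natr1 mulrDl mul1r.
have : 0 <= d * (n%:R * d) by rewrite mulr_ge0 // mulr_ge0.
lra.
Qed.

Lemma fekete (V : eqType) (nbrs : V -> seq V) (R : realType) (D : nat) e0 :
  good_graph nbrs ->
  (forall v, (size (nbrs v) <= D)%N) -> is_edge nbrs e0 ->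
  let b := fun n => Rn nbrs R n `^ (n%:R)^-1 in
  let L := inf [set b n | n in [set n | (0 < n)%N]]%classic in
  forall eps : R, 0 < eps -> exists N, forall n, (N <= n)%N -> `|L - b n| <= eps.
Proof.
move=> G HD he b L eps e0p.
set S := [set b n | n in [set n | (0 < n)%N]]%classic.
have hlb : has_lbound S by exists 0 => _ [n _ <-]; exact: powR_ge0.
have hS : has_inf S by split=> //; exists (b 1%N); exists 1%N.
have h2 : 0 < eps / 2%:R by rewrite divr_gt0.
have [_ [m m0 <-] bm] := inf_adherent h2 hS.
have Rge1 := Rn_ge1 R G HD he.
have Rm : b m ^+ m = Rn nbrs R m.
  by rewrite powR_root // (le_trans _ (Rge1 m)).
have b1 : 1 <= b m by rewrite -(expr_ge1 m0) ?powR_ge0 // Rm.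
set d := eps / (2%:R * b m).
have d0 : 0 < d by rewrite divr_gt0 // mulr_gt0 // (lt_le_trans _ b1).
set C : R := (D ^ m)%:R.
exists (maxn 1 (Num.truncn (C / d)).+1) => n; rewrite geq_max => /andP[n1 nt].
have Cn : C <= (1 + d) ^+ n.
  apply: le_trans (bern n (ltW d0)).
  have : C / d < n%:R.
    apply: lt_le_trans (truncnS_gt _) _; by rewrite ler_nat.
  rewrite ltr_pdivrMr // => h; lra.
have hn : Rn nbrs R n <= (b m * (1 + d)) ^+ n.
  rewrite {1}(divn_eq n m) (le_trans (Rn_pow R G HD he _ _ _)) //.
  rewrite exprMn; apply: ler_pM; first by rewrite exprn_ge0 // (le_trans _ (Rge1 m)).
  - by rewrite ler0n.
  - rewrite -Rm -exprM; apply: (ler_weXn2l b1).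
    by rewrite {2}(divn_eq n m) mulnC leq_addr.
  - apply: le_trans Cn; rewrite ler_nat; apply: leq_pexp2l; last first.
      by apply: ltnW; apply: ltn_pmod.
    case: G => _ _ _ H2 _.
    exact: (leq_trans _ (leq_trans (H2 e0.1) (HD e0.1))).
have bn : b n <= b m * (1 + d).
  apply: root_le => //; first by apply: (le_trans _ (Rge1 n)).
  by rewrite mulr_ge0 ?addr_ge0 ?(le_trans _ b1) // ltW.
have Lbn : L <= b n by apply: ge_inf => //; exists n.
have bd : b m * (1 + d) = b m + eps / 2%:R.
  have bm0 : b m != 0 by rewrite gt_eqF // (lt_le_trans _ b1).
  rewrite mulrDr mulr1 /d; congr (_ + _); field.
  by rewrite bm0.
rewrite distrC ger0_norm ?subr_ge0 //.
move: bm bn Lbn; rewrite bd -/L; lra.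
Qed.

Lemma dtheta_ge0 (V : eqType) (R : realType) (th : R) (p q : nat -> edge V) :
  0 <= th -> 0 <= dtheta th p q.
Proof. by move=> t0; rewrite /dtheta; case: pselect => // h; rewrite exprn_ge0. Qed.

Lemma dtheta_le1 (V : eqType) (R : realType) (th : R) (p q : nat -> edge V) :
  0 <= th -> th <= 1 -> dtheta th p q <= 1.
Proof. by move=> t0 t1; rewrite /dtheta; case: pselect => // h; rewrite exprn_ile1. Qed.

Lemma dtheta_cons (V : eqType) (R : realType) (th : R) (p q : nat -> edge V) e :
  dtheta th (pcons e p) (pcons e q) = th * dtheta th p q.
Proof.
rewrite /dtheta; case: pselect => [h1|h1]; case: pselect => [h2|h2].
- rewrite -exprS; congr (_ ^+ _).
  case: ex_minnP => m1 hm1 min1; case: ex_minnP => m2 hm2 min2.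
  case: m1 hm1 min1 => [|m1] hm1 min1; first by rewrite eqxx in hm1.
  apply/eqP; rewrite eqn_leq; apply/andP; split.
  + exact: (min1 m2.+1 hm2).
  + exact: (min2 m1 hm1).
- by exfalso; case: h1 => [[|k] hk] //; [rewrite eqxx in hk | apply: h2; exists k].
- by exfalso; case: h2 => k hk; apply: h1; exists k.+1.
- by rewrite mulr0.
Qed.

Lemma path_cons (V : eqType) (nbrs : V -> seq V) (p : nat -> edge V) w :
  good_graph nbrs -> is_path nbrs p -> w \in nbrs (p 0%N).1 -> w != (p 0%N).2 ->
  is_path nbrs (pcons (w, (p 0%N).1) p).
Proof.
case=> _ Hs _ _ _ [h0 hi] ws wn.
have hw : is_edge nbrs (w, (p 0%N).1) by rewrite /is_edge /= Hs.
split=> // [[|i]] //=.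
rewrite /turn hw h0 eqxx /=; apply/negP => /eqP e.
by move: wn; rewrite e /= eqxx.
Qed.

Lemma rho_prop (V : eqType) (nbrs : V -> seq V) (R : realType) (D : nat) e0 :
  good_graph nbrs ->
  (forall v, (size (nbrs v) <= D)%N) -> is_edge nbrs e0 ->
  0 <= rho nbrs R /\
  forall eps : R, 0 < eps -> exists N, forall n, (N <= n)%N ->
    `|rho nbrs R - Rn nbrs R n `^ (n%:R)^-1| <= eps.
Proof.
move=> G HD he.
have key := @fekete _ _ R _ _ G HD he; rewrite /= in key.
set L := inf _ in key.
have hc : ((fun n => Rn nbrs R n `^ (n%:R)^-1) @ \oo --> L)%classic.
  apply/cvgrPdist_le => eps ep.
  have [N HN] := key eps ep; exists N => // n /= hn; exact: HN.
have -> : rho nbrs R = L by rewrite /rho; apply: cvg_lim hc.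
split=> //; apply: lb_le_inf; first by exists (Rn nbrs R 1 `^ (1%:R)^-1); exists 1%N.
by move=> _ [n _ <-]; exact: powR_ge0.
Qed.

Unset Implicit Arguments.

Lemma claim (V : eqType) (nbrs : V -> seq V) (R : realType)
  (theta : R) (z : R[i]) (f : (nat -> edge V) -> R[i]) (L0 : R) :
  good_graph nbrs -> 0 < theta -> 0 <= L0 ->
  (forall p q, is_path nbrs p -> is_path nbrs q -> p 0%N = q 0%N ->
     `|f p - f q| <= toC (L0 * dtheta theta p q)) ->
  (forall p, is_path nbrs p -> transfer nbrs f p = z * f p) ->
  forall n p q, is_path nbrs p -> is_path nbrs q -> p 0%N = q 0%N ->
  `|z| ^+ n * `|f p - f q| <=
     (nchains nbrs n (p 0%N))%:R * toC (L0 * theta ^+ n * dtheta theta p q).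
Proof.
move=> G th0 L00 HL hT; elim=> [|n IH] p q pp qp pq.
  by rewrite expr0 mul1r mul1r expr0 mulr1; exact: HL.
rewrite exprSr -mulrA -normrM mulrBr -!hT // /transfer -pq -sumrB.
apply: le_trans (ler_wpM2l (exprn_ge0 _ (normr_ge0 _)) (ler_norm_sum _ _ _)) _.
change (nchains nbrs n.+1 (p 0%N)) with
  (\sum_(w <- nbrs (p 0%N).1 | w != (p 0%N).2) nchains nbrs n (w, (p 0%N).1)).
rewrite natr_sum mulr_sumr mulr_suml big_seq_cond [X in _ <= X]big_seq_cond.
apply: ler_sum => w /andP[ws wn].
have qcons := path_cons G qp; rewrite -pq in qcons.
have := IH _ _ (path_cons G pp ws wn) (qcons _ ws wn) erefl.
by rewrite /= dtheta_cons exprSr -!mulrA.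
Qed.

Theorem mainTheorem8 (V : eqType) (nbrs : V -> seq V) (R : realType)
  (theta : R) (z : R[i]) (f : (nat -> edge V) -> R[i]) :
  good_graph nbrs -> bounded_degree nbrs ->
  0 < theta < 1 ->
  toC (theta * rho nbrs R) < `|z| ->
  Lip nbrs theta f ->
  (forall p, is_path nbrs p -> transfer nbrs f p = z * f p) ->
  in_D1 nbrs f.
Proof.
move=> G [Dg HD] /andP[th0 th1] hz [[M HM] [L HL]] hT.
split; first by exists M.
move=> p q pp qp pq.
have he : is_edge nbrs (p 0%N) by case: pp.
have [rho0 hrho] := @rho_prop _ _ R _ _ G HD he.
set L0 := Num.max L 0.
have L00 : 0 <= L0 by rewrite le_max lexx orbT.
have HL' : forall p q, is_path nbrs p -> is_path nbrs q -> p 0%N = q 0%N ->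
    `|f p - f q| <= toC (L0 * dtheta theta p q).
  move=> p' q' hp hq hpq; apply: le_trans (HL p' q' hp hq (congr1 fst hpq)) _.
  rewrite /toC -rmorphM lecR; apply: ler_wpM2r; first exact: dtheta_ge0 (ltW th0).
  by rewrite le_max lexx.
have Hc := @claim _ _ _ _ _ _ _ G th0 L00 HL' hT.
set r := complex.Re `|z|.
have rz : `|z| = (r%:C)%C by rewrite RRe_real // normr_real.
set d := complex.Re `|f p - f q|.
have dz : `|f p - f q| = (d%:C)%C by rewrite RRe_real // normr_real.
have r0 : 0 <= r by rewrite -ler0c -rz normr_ge0.
have d0 : 0 <= d by rewrite -ler0c -dz normr_ge0.
have hz' : theta * rho nbrs R < r by move: hz; rewrite rz /toC ltcR.
have hb : forall n, r ^+ n * d <= Rn nbrs R n * (L0 * theta ^+ n).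
  move=> n; have := Hc n p q pp qp pq.
  rewrite rz dz /toC -rmorphXn -rmorphM -(rmorph_nat (real_complex R)) -rmorphM lecR => h.
  apply: le_trans h _; apply: ler_pM.
  - by rewrite ler0n.
  - apply: mulr_ge0; last exact: dtheta_ge0 (ltW th0).
    by apply: mulr_ge0 => //; apply: exprn_ge0; exact: ltW.
  - exact: (@Rn_ub _ _ R _ HD n _ he).
  - rewrite -[X in _ <= X]mulr1; apply: ler_wpM2l.
      by rewrite mulr_ge0 // exprn_ge0 // ltW.
    by apply: dtheta_le1; rewrite ltW.
have rpos : 0 < r by have := mulr_ge0 (ltW th0) rho0; lra.
set c := (rho nbrs R + r / theta) / 2%:R.
have tc : theta * c = (theta * rho nbrs R + r) / 2%:R.
  by rewrite /c; field; rewrite gt_eqF.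
have hc2 : theta * c < r by rewrite tc; lra.
have hc1 : rho nbrs R < c by rewrite -(ltr_pM2l th0) tc; lra.
have c0 : 0 <= c by lra.
have cr : 0 < c - rho nbrs R by rewrite subr_gt0.
have [N HN] := hrho (c - rho nbrs R) cr.
have HR : forall n, (N <= n)%N -> (0 < n)%N -> Rn nbrs R n <= c ^+ n.
  move=> n Nn n0; have := HN n Nn; rewrite ler_norml => /andP[h _].
  have Rn0 : 0 <= Rn nbrs R n by apply: le_trans (@Rn_ge1 _ _ R _ _ G HD he n).
  rewrite -(powR_root Rn0 n0); apply: lerXn2r; rewrite ?nnegrE ?powR_ge0 //.
  lra.
set x := theta * c / r.
have x0 : 0 <= x by rewrite /x divr_ge0 // mulr_ge0 // ltW.
have x1 : x < 1 by rewrite /x ltr_pdivrMr // mul1r.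
have hd : forall n, (N <= n)%N -> (0 < n)%N -> d <= L0 * x ^+ n.
  move=> n Nn n0.
  have e : r ^+ n * (L0 * x ^+ n) = L0 * (theta * c) ^+ n.
    rewrite /x expr_div_n; field; rewrite expf_neq0 // gt_eqF //.
  rewrite -(ler_pM2l (exprn_gt0 n rpos)) e.
  apply: le_trans (hb n) _; rewrite exprMn mulrCA mulrC.
  rewrite [X in _ <= X]mulrC; apply: ler_wpM2r; first exact: L00.
  rewrite mulrC; apply: ler_wpM2l; last exact: HR.
  by apply: exprn_ge0; exact: ltW.
have dle : d <= 0.
  rewrite leNgt; apply/negP => dp.
  have hx : (x ^+ n @[n --> \oo] --> 0)%classic by apply: cvg_expr; rewrite ger0_norm.
  have ep : 0 < d / (L0 + 1) by rewrite divr_gt0 //; lra.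
  have [N' _ HN'] := (proj1 (cvgrPdist_le _ _) hx) _ ep.
  set n := maxn (maxn N N') 1.
  have h1 := hd n (leq_trans (leq_maxl _ _) (leq_maxl _ _)) (leq_maxr _ _).
  have h2 : x ^+ n <= d / (L0 + 1).
    have := HN' n (leq_trans (leq_maxr _ _) (leq_maxl _ _)).
    by rewrite sub0r normrN ger0_norm // exprn_ge0.
  have h3 : L0 * x ^+ n <= L0 * (d / (L0 + 1)) by apply: ler_wpM2l.
  have h4 : L0 * (d / (L0 + 1)) = d - d / (L0 + 1).
    by field; apply/eqP; lra.
  lra.
have dE : d = 0 by lra.
by apply/eqP; rewrite -subr_eq0 -normr_eq0 dz dE.
Qed.
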